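(* If $p$ is prime, then $f_p$ is not oblivious to $p$; that is, for every asynchronous binary transducer for $f_p$, every accessible cycle has length a multiple of $p$.
   Context: An asynchronous binary transducer is $(S,s_0,t,o)$ with $S$ finite, $s_0\in S$, $t\colon S\times\{0,1\}\to S$, $o\colon S\times\{0,1\}\to\{0,1\}^*$; $t$ and $o$ extend to words: for $s\in S$ and $\sigma_1\sigma_2\cdots$ let $s_1=s$, $s_{n+1}=t(s_n,\sigma_n)$, $t(s,\sigma_1\cdots\sigma_n)=s_{n+1}$, $o(s,\sigma_1\sigma_2\cdots)=o(s_1,\sigma_1)o(s_2,\sigma_2)\cdots$. It is a transducer for a homeomorphism $f$ of $\{0,1\}^\omega$ if $f(\psi)=o(s_0,\psi)$ for all $\psi$. A state $s$ is accessible if $s=t(s_0,\alpha)$ for some finite word $\alpha$. A cycle is a pair $(c,\gamma)$ with $c\in S$ and $\gamma$ a nonempty finite word with $t(c,\gamma)=c$; its length is $|\gamma|$; it is accessible if $c$ is. A transducer is oblivious to $p$ if it has an accessible cycle whose length is not a multiple of $p$; a rational homeomorphism is oblivious to $p$ if some transducer for it is. $f_p$ is the homeomorphism switching the digits in positions $p,2p,3p,\ldots$ of a binary sequence and leaving other digits unchanged. *)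

(* Defs.v *)
From mathcomp Require Import all_boot.
Unset Printing Implicit Defensive.

(* Infinite binary sequences {0,1}^omega are functions nat -> bool (0-indexed;
   psi i is the (i+1)-th digit). Finite words are seq bool. *)

Record transducer := Transducer {
  tstate : finType;
  s0 : tstate;
  tr : tstate -> bool -> tstate;
  out : tstate -> bool -> seq bool }.

Definition tr_word (T : transducer) (s : tstate T) (w : seq bool) : tstate T :=
  foldl (@tr T) s w.

(* the state s_{n+1} reached after reading the first n letters of psi *)
Fixpoint state_at (T : transducer) (s : tstate T) (psi : nat -> bool) (n : nat)
  : tstate T :=
  match n with
  | 0 => s
  | n'.+1 => @tr T (state_at T s psi n') (psi n')
  end.

Fixpoint out_prefix (T : transducer) (s : tstate T) (psi : nat -> bool) (n : nat)
  : seq bool :=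
  match n with
  | 0 => [::]
  | n'.+1 => out_prefix T s psi n' ++ @out T (state_at T s psi n') (psi n')
  end.

(* the infinite word o(s, psi) equals phi: all finite partial outputs are
   prefixes of phi, and their lengths are unbounded (so the concatenation
   is an infinite word). *)
Definition out_inf_eq (T : transducer) (s : tstate T) (psi phi : nat -> bool) :=
  (forall n i, i < size (out_prefix T s psi n) ->
      nth false (out_prefix T s psi n) i = phi i) /\
  (forall m, exists n, m <= size (out_prefix T s psi n)).

Definition is_transducer_for (T : transducer) (f : (nat -> bool) -> (nat -> bool)) :=
  forall psi, out_inf_eq T (@s0 T) psi (f psi).

Definition accessible (T : transducer) (s : tstate T) :=
  exists alpha : seq bool, s = tr_word T (@s0 T) alpha.

Definition is_cycle (T : transducer) (c : tstate T) (gamma : seq bool) :=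
  gamma != [::] /\ tr_word T c gamma = c.

Definition oblivious_transducer (T : transducer) (p : nat) :=
  exists (c : tstate T) (gamma : seq bool),
    accessible T c /\ is_cycle T c gamma /\ ~~ (p %| size gamma).

(* f_p switches digits in positions p, 2p, 3p, ... (1-indexed) *)
Definition f_ (p : nat) (psi : nat -> bool) : nat -> bool :=
  fun i => if p %| i.+1 then ~~ psi i else psi i.

Definition oblivious (f : (nat -> bool) -> (nat -> bool)) (p : nat) :=
  exists T : transducer, is_transducer_for T f /\ oblivious_transducer T p.

(* Main.v *)
Require Import Defs.
From mathcomp Require Import all_boot.
From mathcomp Require Import zify.

Definition pre (u : seq bool) (psi : nat -> bool) : nat -> bool :=
  fun i => if i < size u then nth false u i else psi (i - size u).

Lemma state_pre_take (T : transducer) s u psi n : n <= size u ->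
  state_at T s (pre u psi) n = tr_word T s (take n u).
Proof.
elim: n => [|n IH] Hn /=; first by rewrite take0.
rewrite IH; last by lia.
rewrite (take_nth false Hn) /tr_word -cats1 foldl_cat /= /pre Hn //.
Qed.

Lemma state_pre (T : transducer) s u psi m :
  state_at T s (pre u psi) (size u + m) = state_at T (tr_word T s u) psi m.
Proof.
elim: m => [|m IH] /=.
  by rewrite addn0 state_pre_take // take_size.
rewrite addnS /= IH /pre ltnNge leq_addr /=.
by rewrite addKn.
Qed.

Lemma out_pre (T : transducer) s u psi m :
  out_prefix T s (pre u psi) (size u + m) =
  out_prefix T s (pre u psi) (size u) ++ out_prefix T (tr_word T s u) psi m.
Proof.
elim: m => [|m IH] /=; first by rewrite addn0 cats0.
rewrite addnS /= IH -catA; congr (_ ++ (_ ++ _)).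
by rewrite state_pre /pre ltnNge leq_addr /= addKn.
Qed.

Lemma state_ext (T : transducer) s phi phi' n :
  (forall i, i < n -> phi i = phi' i) -> state_at T s phi n = state_at T s phi' n.
Proof.
elim: n => [|n IH] H //=.
rewrite IH ?H // => i Hi; apply: H; lia.
Qed.

Lemma out_ext (T : transducer) s phi phi' n :
  (forall i, i < n -> phi i = phi' i) -> out_prefix T s phi n = out_prefix T s phi' n.
Proof.
elim: n => [|n IH] H //=.
rewrite IH ?H ?(@state_ext T s phi phi' n) // => i Hi; apply: H; lia.
Qed.

Lemma out_mono (T : transducer) s phi n d :
  size (out_prefix T s phi n) <= size (out_prefix T s phi (n + d)).
Proof.
elim: d => [|d IH]; first by rewrite addn0.
rewrite addnS /= size_cat; lia.
Qed.

Section Main.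
Variable p : nat.
Variable T : transducer.
Hypothesis HT : is_transducer_for T (f_ p).

Definition Lof u := size (out_prefix T (s0 T) (pre u (fun _ => false)) (size u)).

Lemma key_eq u psi m j : j < size (out_prefix T (tr_word T (s0 T) u) psi m) ->
  nth false (out_prefix T (tr_word T (s0 T) u) psi m) j = f_ p (pre u psi) (Lof u + j).
Proof.
move=> Hj.
have [H1 _] := HT (pre u psi).
have E : out_prefix T (s0 T) (pre u psi) (size u) =
         out_prefix T (s0 T) (pre u (fun _ => false)) (size u).
  by apply: out_ext => i Hi; rewrite /pre Hi.
have := H1 (size u + m) (Lof u + j).
rewrite out_pre E nth_cat size_cat -/(Lof u) ifN; last by lia. rewrite addKn.
by apply; lia.
Qed.

Lemma unbounded u psi M : exists m,
  M < size (out_prefix T (tr_word T (s0 T) u) psi m).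
Proof.
have [_ H2] := HT (pre u psi).
have [n Hn] := H2 (Lof u + M.+1).
exists n.
have := out_mono T (s0 T) (pre u psi) n (size u).
rewrite addnC out_pre size_cat.
have -> : size (out_prefix T (s0 T) (pre u psi) (size u)) = Lof u.
  by rewrite /Lof; congr size; apply: out_ext => i Hi; rewrite /pre Hi.
lia.
Qed.

Lemma cyc_div c gamma : prime p -> accessible T c -> is_cycle T c gamma ->
  p %| size gamma.
Proof.
move=> Hp [alpha ->] [Hne Hc].
set u0 := alpha; set u1 := alpha ++ gamma.
have Eu : tr_word T (s0 T) u1 = tr_word T (s0 T) u0.
  by rewrite /u1 /tr_word foldl_cat; exact: Hc.
have EQ : forall psi j, f_ p (pre u0 psi) (Lof u0 + j) = f_ p (pre u1 psi) (Lof u1 + j).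
  move=> psi j.
  have [m Hm] := unbounded u0 psi j.
  rewrite -(key_eq u0 psi m j Hm) -(key_eq u1 psi m j) ?Eu //.
set L0 := Lof u0; set L1 := Lof u1.
set a := size u0; set b := size u1.
have Hb : b = a + size gamma by rewrite /b /u1 size_cat.
have p0 : 0 < p by apply: prime_gt0.
set N := L0 + L1 + a + b + 1.
set K := p * N.
have HK : N <= K by rewrite /K leq_pmull.
set j := K - L0.+1.
have pK : p %| L0 + j + 1.
  have -> : L0 + j + 1 = K by rewrite /j; lia.
  by rewrite /K dvdn_mulr.
have E0 := EQ (fun _ => false) j.
rewrite /f_ /pre in E0.
rewrite -/a -/b -/L0 -/L1 in E0.
have F0 : (L0 + j < a) = false by apply/negbTE; rewrite -leqNgt; lia.
have F1 : (L1 + j < b) = false by apply/negbTE; rewrite -leqNgt; lia.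
rewrite F0 F1 in E0.
have pK1 : p %| (L1 + j).+1.
  move: E0; rewrite -addn1 pK /=; by case: (p %| (L1 + j).+1).
set x := L0 + j - a.
have E1 := EQ (fun i => i == x) j.
rewrite /f_ /pre -/a -/b -/L0 -/L1 in E1.
rewrite F0 F1 in E1.
rewrite pK1 -addn1 pK eqxx /= in E1.
have Ex : L1 + j - b = x by apply/eqP; move: E1; case: (_ == _).
have : L1 + j + 1 = (L0 + j + 1) + size gamma by rewrite /x in Ex; lia.
move: pK1; rewrite -addn1 => pK1 Heq.
by rewrite Heq dvdn_addr in pK1.
Qed.

End Main.

Theorem lemma3p3 (p : nat) : prime p ->
  ~ oblivious (f_ p) p /\
  (forall T : transducer, is_transducer_for T (f_ p) ->
     forall (c : tstate T) (gamma : seq bool),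
       accessible T c -> is_cycle T c gamma -> p %| size gamma).
Proof.
move=> Hp; split.
  move=> [T [HT [c [g [Ha [Hc Hd]]]]]].
  by rewrite (@cyc_div p T HT c g Hp Ha Hc) in Hd.
move=> T HT c g Ha Hc; exact: (@cyc_div p T HT c g Hp Ha Hc).
Qed.
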